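(* Let $X$ be a compact metric space and $F\colon X\to 2^X$ a set-valued mapping with the specification property. Then the shift map $\sigma\colon\varprojlim F\to\varprojlim F$ has the specification property (as a single-valued continuous map on the compact metric space $\varprojlim F$).
   Context: $d$ is the metric on $X$; $2^X$ is the space of nonempty closed subsets of $X$; a set-valued mapping is an upper semicontinuous $F\colon X\to 2^X$. An orbit of $x$ under $F$ is a sequence $(x_j)_{j=0}^\infty$ with $x_0=x$, $x_{j+1}\in F(x_j)$. The inverse limit is $\varprojlim F=\{(x_0,x_1,x_2,\dots)\in X^{\mathbb{N}}: x_i\in F(x_{i+1})\text{ for all } i\}$, a subspace of the product $X^{\mathbb{N}}$ (with any compatible metric, e.g. $\sum_i 2^{-i}\min(1,d(x_i,y_i))$), and $\sigma(x_0,x_1,\dots)=(x_1,x_2,\dots)$. A set-valued $F$ has the specification property if for every $\epsilon>0$ there is $M\in\mathbb{N}$ such that for any $n$, any $x^1,\dots,x^n\in X$, any integers $0\le a_1\le b_1<a_2\le\dots<a_n\le b_n$ with $a_{i+1}-b_i>M$, any orbits $(x^i_j)_{j=0}^\infty$ of the $x^i$, and any $P>M+b_n-a_1$, there is $z\in X$ with an orbit $(z_j)_{j=0}^\infty$ with $d(z_j,x^i_j)<\epsilon$ for $1\le i\le n$, $a_i\le j\le b_i$, and $z_P=z$. For a single-valued continuous map $\sigma$ this means (orbits being unique): for every $\epsilon>0$ there is $M$ such that for any points $x^1,\dots,x^n$, any such $a_i,b_i$ with $a_{i+1}-b_i>M$, and any $P>M+b_n-a_1$, there is $z$ with $d(\sigma^j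 z,\sigma^j x^i)<\epsilon$ for $a_i\le j\le b_i$ and $\sigma^P z=z$. *)

(* Defs.v *)
From Stdlib Require Export Reals Lra Lia List.
Open Scope R_scope.

Set Implicit Arguments.

Definition is_metric (X : Type) (d : X -> X -> R) : Prop :=
  (forall x y, 0 <= d x y) /\
  (forall x y, d x y = 0 <-> x = y) /\
  (forall x y, d x y = d y x) /\
  (forall x y z, d x z <= d x y + d y z).

Definition is_open (X : Type) (d : X -> X -> R) (U : X -> Prop) : Prop :=
  forall x, U x -> exists r, 0 < r /\ forall y, d x y < r -> U y.

Definition is_closed (X : Type) (d : X -> X -> R) (A : X -> Prop) : Prop :=
  is_open d (fun x => ~ A x).

Definition is_compact (X : Type) (d : X -> X -> R) : Prop :=
  forall (I : Type) (U : I -> X -> Prop),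
    (forall i, is_open d (U i)) ->
    (forall x, exists i, U i x) ->
    exists l : list I, forall x, exists i, In i l /\ U i x.

(** F : X -> 2^X : nonempty closed values, upper semicontinuous. *)
Definition set_valued_map (X : Type) (d : X -> X -> R) (F : X -> X -> Prop) : Prop :=
  (forall x, exists y, F x y) /\
  (forall x, is_closed d (F x)) /\
  (forall x (U : X -> Prop), is_open d U -> (forall y, F x y -> U y) ->
     exists delta, 0 < delta /\
       forall x', d x x' < delta -> forall y, F x' y -> U y).

Definition is_orbit (X : Type) (F : X -> X -> Prop) (x : X) (o : nat -> X) : Prop :=
  o 0%nat = x /\ forall j, F (o j) (o (S j)).

(** Specification property for a set-valued map.  The n blocks are indexed
    by i < n (0-based); [pts i] is the point x^i, [orb i] its chosen orbit. *)
Definition spec_setvalued (X : Type) (d : X -> X -> R) (F : X -> X -> Prop) : Prop :=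
  forall eps, 0 < eps ->
  exists M : nat,
    forall (n : nat) (pts : nat -> X) (a b : nat -> nat) (orb : nat -> nat -> X) (P : nat),
      (0 < n)%nat ->
      (forall i, (i < n)%nat -> (a i <= b i)%nat) ->
      (forall i, (S i < n)%nat -> (a (S i) - b i > M)%nat) ->
      (forall i, (i < n)%nat -> is_orbit F (pts i) (orb i)) ->
      (P > M + b (pred n) - a 0%nat)%nat ->
      exists (z : X) (zo : nat -> X),
        is_orbit F z zo /\
        (forall i j, (i < n)%nat -> (a i <= j <= b i)%nat -> d (zo j) (orb i j) < eps) /\
        zo P = z.

Definition in_invlim (X : Type) (F : X -> X -> Prop) (s : nat -> X) : Prop :=
  forall i, F (s (S i)) (s i).

Definition shift (X : Type) (s : nat -> X) : nat -> X := fun k => s (S k).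

Definition shift_iter (X : Type) (j : nat) (s : nat -> X) : nat -> X :=
  fun k => s (j + k)%nat.

(** The product metric D(s,t) = sum_i 2^{-i} min(1, d(s_i,t_i)) is < eps.
    (The series always converges, and its sum is unique.) *)
Definition invlim_dist_lt (X : Type) (d : X -> X -> R) (s t : nat -> X) (eps : R) : Prop :=
  exists l, infinite_sum (fun i => (/ 2) ^ i * Rmin 1 (d (s i) (t i))) l /\ l < eps.

Definition spec_shift (X : Type) (d : X -> X -> R) (F : X -> X -> Prop) : Prop :=
  forall eps, 0 < eps ->
  exists M : nat,
    forall (n : nat) (pts : nat -> nat -> X) (a b : nat -> nat) (P : nat),
      (0 < n)%nat ->
      (forall i, (i < n)%nat -> in_invlim F (pts i)) ->
      (forall i, (i < n)%nat -> (a i <= b i)%nat) ->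
      (forall i, (S i < n)%nat -> (a (S i) - b i > M)%nat) ->
      (P > M + b (pred n) - a 0%nat)%nat ->
      exists z : nat -> X,
        in_invlim F z /\
        (forall i j, (i < n)%nat -> (a i <= j <= b i)%nat ->
           invlim_dist_lt d (shift_iter j z) (shift_iter j (pts i)) eps) /\
        shift_iter P z = z.

(* Main.v *)
Require Import Defs.
From Stdlib Require Import ClassicalEpsilon FunctionalExtensionality.


Lemma geo_bound (A x : R) (m : nat) : 0 <= x < 1 -> 0 <= A ->
  sum_f_R0 (fun k => x ^ k * A) m <= A / (1 - x).
Proof.
  intros Hx HA.
  rewrite <- scal_sum, tech3 by lra.
  assert (0 <= x ^ S m) by (apply pow_le; lra).
  unfold Rdiv. apply Rmult_le_compat_l; [lra|].
  rewrite <- (Rmult_1_l (/ (1 - x))) at 2.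
  apply Rmult_le_compat_r. apply Rlt_le, Rinv_0_lt_compat; lra. lra.
Qed.

Lemma cv_le (u : nat -> R) l B : Un_cv u l -> (forall n, u n <= B) -> l <= B.
Proof.
  intros Hc Hb. destruct (Rle_dec l B) as [|Hn]; auto.
  destruct (Hc (l - B)) as [N HN]. lra.
  specialize (HN N (le_n N)). specialize (Hb N). unfold Rdist in HN.
  apply Rabs_def2 in HN. lra.
Qed.

Lemma series_lt (f : nat -> R) B eps : (forall k, 0 <= f k) ->
  (forall m, sum_f_R0 f m <= B) -> B < eps ->
  exists l, infinite_sum f l /\ l < eps.
Proof.
  intros H0 Hb HB.
  destruct (growing_cv (sum_f_R0 f)) as [l Hl].
  - intro n. simpl. specialize (H0 (S n)). lra.
  - exists B. intros x [i ->]. apply Hb.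
  - exists l. split. exact Hl. pose proof (cv_le _ _ _ Hl Hb). lra.
Qed.

Lemma mod_succ (P j : nat) : (0 < P)%nat ->
  (S j mod P = S (j mod P))%nat \/ (S j mod P = 0 /\ S (j mod P) = P)%nat.
Proof.
  intros HP. pose proof (Nat.div_mod_eq j P) as E.
  pose proof (Nat.mod_upper_bound j P ltac:(lia)) as U.
  set (q := (j / P)%nat) in *. set (r := (j mod P)%nat) in *.
  destruct (Nat.eq_dec (S r) P) as [e|ne].
  - right. split; [|exact e]. symmetry. apply (Nat.mod_unique _ _ (S q)). lia. nia.
  - left. symmetry. apply (Nat.mod_unique _ _ q). lia. lia.
Qed.

Theorem theorem7 (X : Type) (d : X -> X -> R) (F : X -> X -> Prop) :
  is_metric d ->
  is_compact d ->
  set_valued_map d F ->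
  spec_setvalued d F ->
  spec_shift d F.
Proof.
  intros Hm _ Hsv Hspec eps Heps.
  destruct Hm as (Hd0 & _).
  destruct Hsv as (Fne & _ & _).
  set (g := fun x => proj1_sig (constructive_indefinite_description _ (Fne x))).
  assert (Hg : forall x, F x (g x)) by (intro x; unfold g; destruct constructive_indefinite_description; auto).
  destruct (Hspec (eps/8)) as [MF HMF]; [lra|].
  destruct (pow_lt_1_zero (2/3) ltac:(rewrite Rabs_right; lra) (eps/16) ltac:(lra)) as [N HN].
  specialize (HN N (le_n N)). set (c := (2/3)^N) in *.
  assert (Hc0 : 0 <= c) by (apply pow_le; lra).
  rewrite Rabs_right in HN by lra.
  exists (MF + N)%nat.
  intros n pts a b P Hn Hinv Hab Hgap HP.
  assert (Hba : forall i, (S i < n)%nat -> (b i < a (S i))%nat).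
  { intros i Hi. specialize (Hgap i Hi). lia. }
  assert (Ha0 : forall i, (i < n)%nat -> (a 0 <= a i)%nat).
  { induction i; intros Hi. lia. pose proof (Hba i Hi). pose proof (Hab i ltac:(lia)).
    specialize (IHi ltac:(lia)). lia. }
  assert (Hbm : forall m i, (i + m < n)%nat -> (b i <= b (i + m))%nat).
  { induction m; intros i Hi. rewrite Nat.add_0_r; lia.
    specialize (IHm i ltac:(lia)). pose proof (Hba (i+m)%nat ltac:(lia)).
    pose proof (Hab (S (i+m)) ltac:(lia)). replace (i + S m)%nat with (S (i+m)) by lia. lia. }
  assert (Hbn : forall i, (i < n)%nat -> (b i <= b (pred n))%nat).
  { intros i Hi. replace (pred n) with (i + (pred n - i))%nat by lia. apply Hbm. lia. }
  set (T := (b (pred n) + N)%nat).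
  pose (orb' := fun k j => if (j <=? T)%nat then pts (n-1-k)%nat (T - j)%nat
                          else Nat.iter (j - T) g (pts (n-1-k)%nat 0%nat)).
  pose (a' := fun k => (T - b (n-1-k) - N)%nat).
  pose (b' := fun k => (T - a (n-1-k))%nat).
  pose (pts' := fun k => pts (n-1-k)%nat T).
  destruct (HMF n pts' a' b' orb' P) as (z0 & zo & Horb & Hclose & HzP).
  - exact Hn.
  - intros k Hk. unfold a', b'. pose proof (Hab (n-1-k)%nat ltac:(lia)). lia.
  - intros k Hk. unfold a', b'.
    replace (n - 1 - S k)%nat with (n-2-k)%nat by lia.
    replace (n - 1 - k)%nat with (S (n-2-k)) by lia.
    pose proof (Hgap (n-2-k)%nat ltac:(lia)).
    pose proof (Hbn (n-2-k)%nat ltac:(lia)).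
    pose proof (Hab (S (n-2-k)) ltac:(lia)).
    pose proof (Hbn (S (n-2-k)) ltac:(lia)). unfold T. lia.
  - intros k Hk. split.
    + unfold orb', pts'. simpl. f_equal. lia.
    + intro j. unfold orb'.
      destruct (Nat.leb_spec (S j) T); destruct (Nat.leb_spec j T); try lia.
      * replace (T - j)%nat with (S (T - S j)) by lia. apply Hinv. lia.
      * replace j with T by lia. rewrite Nat.sub_diag. replace (S T - T)%nat with 1%nat by lia.
        simpl. apply Hg.
      * replace (S j - T)%nat with (S (j - T)) by lia. simpl. apply Hg.
  - unfold a', b'. replace (n - 1 - pred n)%nat with 0%nat by lia.
    replace (n-1-0)%nat with (pred n) by lia.
    pose proof (Hbn 0%nat Hn). pose proof (Hab 0%nat Hn). unfold T. lia.
  - assert (HP0 : (0 < P)%nat) by lia.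
    pose (w := fun j => zo (j mod P)%nat).
    assert (Hw : forall j, F (w j) (w (S j))).
    { intro j. unfold w. destruct (mod_succ P j HP0) as [E|[E1 E2]].
      - rewrite E. apply Horb.
      - rewrite E1. destruct Horb as [Ho0 Ho]. rewrite Ho0, <- HzP.
        replace (zo P) with (zo (S (j mod P))) by (rewrite E2; reflexivity). apply Ho. }
    assert (Hwp : forall j m, w (j + P * m)%nat = w j).
    { intros j m. unfold w. rewrite Nat.mul_comm, Nat.Div0.mod_add. reflexivity. }
    destruct P as [|P']; [lia|].
    pose (z := fun k => w (T + P' * k)%nat).
    assert (Hz : forall k, (k <= T)%nat -> (T - k < S P')%nat -> z k = zo (T - k)%nat).
    { intros k Hk HkP. unfold z. replace (T + P' * k)%nat with ((T - k) + S P' * k)%nat by (rewrite Nat.mul_succ_l; lia).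
      rewrite Hwp. unfold w. rewrite Nat.mod_small by lia. reflexivity. }
    exists z. split; [|split].
    + intro k. unfold z. rewrite <- (Hwp (T + P' * k)%nat 1%nat).
      replace (T + P' * k + S P' * 1)%nat with (S (T + P' * S k)) by (rewrite Nat.mul_succ_r; lia).
      apply Hw.
    + intros i j Hi Hj.
      set (f := fun k => (/ 2) ^ k * Rmin 1 (d (shift_iter j z k) (shift_iter j (pts i) k))).
      apply (series_lt f (2 * (eps/8) + 4 * c)).
      * intro k. unfold f. apply Rmult_le_pos. apply pow_le; lra.
        unfold Rmin. destruct Rle_dec; [lra|apply Hd0].
      * intro m. apply Rle_trans with
          (sum_f_R0 (fun k => (/2)^k * (eps/8) + (3/4)^k * c) m).
        { apply sum_Rle. intros k _. unfold f, shift_iter.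
          destruct (Compare_dec.le_lt_dec k N) as [HkN|HkN].
          - assert (Hd : d (z (j+k)%nat) (pts i (j+k)%nat) < eps/8).
            { pose proof (Ha0 i Hi). pose proof (Hbn i Hi).
              rewrite Hz by (unfold T; lia).
              specialize (Hclose (n-1-i)%nat (T - (j+k))%nat ltac:(lia)).
              unfold a', b' in Hclose.
              replace (n - 1 - (n - 1 - i))%nat with i in Hclose by lia.
              specialize (Hclose ltac:(unfold T; lia)).
              unfold orb' in Hclose.
              destruct (Nat.leb_spec (T - (j+k)) T); [|lia].
              replace (n - 1 - (n - 1 - i))%nat with i in Hclose by lia.
              replace (T - (T - (j + k)))%nat with (j+k)%nat in Hclose by (unfold T; lia).
              exact Hclose. }
            assert (0 <= (/2)^k) by (apply pow_le; lra).
            assert (0 <= (3/4)^k * c) by (apply Rmult_le_pos; [apply pow_le; lra|lra]).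
            assert (Rmin 1 (d (z (j + k)%nat) (pts i (j + k)%nat)) <= eps/8)
              by (pose proof (Rmin_r 1 (d (z (j + k)%nat) (pts i (j + k)%nat))); lra).
            pose proof (Rmult_le_compat_l _ _ _ H H1). lra.
          - assert (0 <= (/2)^k) by (apply pow_le; lra).
            assert (0 <= (/2)^k * (eps/8)) by (apply Rmult_le_pos; lra).
            pose proof (Rmin_l 1 (d (z (j + k)%nat) (pts i (j + k)%nat))).
            pose proof (Rmult_le_compat_l _ _ _ H H1).
            assert ((/2)^k <= (3/4)^k * c).
            { replace (/2) with ((3/4) * (2/3)) by field. rewrite Rpow_mult_distr.
              apply Rmult_le_compat_l. apply pow_le; lra.
              unfold c. replace k with (N + (k - N))%nat by lia. rewrite pow_add.
              rewrite <- (Rmult_1_r ((2/3)^N)) at 2. apply Rmult_le_compat_l. apply pow_le; lra.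
              rewrite <- (pow1 (k-N)). apply pow_incr. lra. }
            lra. }
        rewrite sum_plus.
        pose proof (geo_bound (eps/8) (/2) m ltac:(lra) ltac:(lra)).
        pose proof (geo_bound c (3/4) m ltac:(lra) ltac:(lra)).
        replace (eps/8/(1 - /2)) with (2*(eps/8)) in H by field.
        replace (c/(1 - 3/4)) with (4*c) in H0 by field. lra.
      * lra.
    + apply functional_extensionality. intro k. unfold shift_iter, z.
      replace (T + P' * (S P' + k))%nat with ((T + P' * k) + S P' * P')%nat by nia.
      apply Hwp.
Qed.
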